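(* Let $G$ be a connected finite graph, let $\mathcal{L}$ be a degree-list assignment for $G$, and let $g$ be a partial proper $\mathcal{L}$-coloring of $G$. Then for each vertex $u\in V(G)$, $G$ has a partial proper $\mathcal{L}$-coloring $f$ with $\mathrm{dom}(f)\supseteq V(G)\setminus\{u\}$ and $|f^{-1}(\alpha)|\geq|g^{-1}(\alpha)|$ for every color $\alpha$.
   Context: A list assignment for $G$ assigns to each vertex $x$ a set $\mathcal{L}(x)$; it is a degree-list assignment if $|\mathcal{L}(x)|\geq\deg_G(x)$ for all $x$. A partial $\mathcal{L}$-coloring is a function $g$ with $\mathrm{dom}(g)\subseteq V(G)$ and $g(x)\in\mathcal{L}(x)$ for $x\in\mathrm{dom}(g)$; it is proper if adjacent vertices in its domain get different colors. *)

(* Defs.v *)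
From mathcomp Require Import all_boot.
Set Implicit Arguments. Unset Strict Implicit. Unset Printing Implicit Defensive.

Definition simple_graph (V : finType) (e : rel V) : Prop :=
  symmetric e /\ irreflexive e.

Definition connected_graph (V : finType) (e : rel V) : Prop :=
  forall x y : V, connect e x y.

Definition deg (V : finType) (e : rel V) (x : V) : nat := #|[set y | e x y]|.

(* A list assignment: each vertex gets a finite list of colours; |L(x)| is the
   number of distinct colours in it. *)
Definition degree_list_assignment (V : finType) (C : eqType) (e : rel V)
  (L : V -> seq C) : Prop :=
  forall x, deg e x <= size (undup (L x)).

Definition dom (V : finType) (C : eqType) (g : V -> option C) : {set V} :=
  [set x | g x != None].

Definition partial_L_coloring (V : finType) (C : eqType) (L : V -> seq C)
  (g : V -> option C) : Prop :=
  forall x c, g x = Some c -> c \in L x.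

Definition proper_partial (V : finType) (C : eqType) (e : rel V)
  (g : V -> option C) : Prop :=
  forall x y c, e x y -> g x = Some c -> g y = Some c -> False.

Definition preim_card (V : finType) (C : eqType) (g : V -> option C) (a : C) : nat :=
  #|[set x | g x == Some a]|.

(* Main.v *)
Require Import Defs.
From mathcomp Require Import all_boot.
From mathcomp Require Import fingroup perm.
From mathcomp Require Import zify.

Set Implicit Arguments. Unset Strict Implicit. Unset Printing Implicit Defensive.

Lemma uniq_map_in (T1 T2 : eqType) (f : T1 -> T2) s x y :
  uniq (map f s) -> x \in s -> y \in s -> f x = f y -> x = y.
Proof.
elim: s => //= z s IH /andP[nz u]; rewrite !inE.
move=> /orP[/eqP->|xs] /orP[/eqP->|ys] // Hf.
- by rewrite Hf (map_f f ys) in nz.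
- by rewrite -Hf (map_f f xs) in nz.
- exact: IH.
Qed.

Lemma dist_exists (V : finType) (e : rel V) (u : V) :
  (forall x, connect e x u) ->
  exists d : V -> nat, forall v, v != u -> exists w, e v w /\ d w < d v.
Proof.
move=> conn.
pose P x n := [exists p : n.-tuple V, path e x p && (last x p == u)].
have ex x : exists n, P x n.
  have /connectP[p pp lp] := conn x.
  exists (size p); apply/existsP; exists (in_tuple p) => /=.
  by rewrite pp -lp eqxx.
exists (fun x => ex_minn (ex x)) => v vu.
case: ex_minnP => n /existsP[p /andP[pp /eqP lp]] minn.
case: p pp lp => [[|w q]] //= Hs.
  by move=> _ lv; rewrite lv eqxx in vu.
move=> /andP[evw pq] lq.
exists w; split => //.
case: ex_minnP => m _ minm.
have : P w (size q).
  apply/existsP; exists (in_tuple q) => /=; by rewrite pq lq eqxx.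
move/minm; move: Hs => /eqP /= Hs. lia.
Qed.

Section Main.
Variables (V : finType) (C : eqType) (e : rel V) (L : V -> seq C) (u : V)
  (d : V -> nat).
Hypothesis Hd : forall v, v != u -> exists w, e v w /\ d w < d v.
Hypothesis esym : symmetric e.
Hypothesis eirr : irreflexive e.
Hypothesis HL : degree_list_assignment e L.

Definition M (g : V -> option C) := \sum_(x | g x == None) (d x).+1.

Lemma main n : forall g, M g < n ->
  partial_L_coloring L g -> proper_partial e g ->
  exists f : V -> option C,
      [/\ partial_L_coloring L f, proper_partial e f,
          [set: V] :\ u \subset dom f
        & forall a : C, preim_card g a <= preim_card f a].
Proof.
elim: n => // n IH g Mg Pg Qg.
case: (pickP [pred v | (v != u) && (g v == None)]) => [v /andP[vu /eqP gv]|none]; last first.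
  exists g; split => //; apply/subsetP => x; rewrite !inE => /andP[xu _].
  by move: (none x); rewrite /= xu /= => /negbT.
have [/hasP[c cL /forallP Hc]|nofree] :=
  boolP (has (fun c => [forall y, e v y ==> (g y != Some c)]) (L v)).
- pose g' x := if x == v then Some c else g x.
  have [f [Pf Qf Cf Kf]] : exists f : V -> option C,
      [/\ partial_L_coloring L f, proper_partial e f,
          [set: V] :\ u \subset dom f
        & forall a : C, preim_card g' a <= preim_card f a].
    apply: IH.
    + have E1 : M g = (d v).+1 + \sum_(x | (g x == None) && (x != v)) (d x).+1.
        by rewrite /M (bigD1 v) ?gv //.
      have E2 : M g' = \sum_(x | (g x == None) && (x != v)) (d x).+1.
        rewrite /M; apply: eq_bigl => x; rewrite /g'.
        by case: (x =P v) => [->|] /=; rewrite ?andbT ?andbF.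
      by move: Mg; rewrite E1 E2; lia.
    + move=> x c0; rewrite /g'; case: (x =P v) => [-> [<-]|_] //; exact: Pg.
    + move=> x y c0 exy; rewrite /g'.
      case: (x =P v) => [xv|xnv]; case: (y =P v) => [yv|ynv].
      * by rewrite xv yv eirr in exy.
      * move=> [<-] gy; have := Hc y; rewrite -xv exy gy eqxx //.
      * move=> gx [Ec]; have := Hc x; rewrite esym -yv exy gx Ec eqxx //.
      * exact: Qg.
  exists f; split => // a; apply: leq_trans (Kf a).
  apply: subset_leq_card; apply/subsetP => x; rewrite !inE /g'.
  case: (x =P v) => // ->; by rewrite gv.
- have Hn c : c \in L v -> exists y, e v y /\ g y = Some c.
    move=> cL; have : ~~ [forall y, e v y ==> (g y != Some c)].
      by apply: contra nofree => H; apply/hasP; exists c.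
    rewrite negb_forall => /existsP[y]; rewrite negb_imply negbK => /andP[evy /eqP gy].
    by exists y.
  have [w [evw dw]] := Hd vu.
  pose N := [set y | e v y].
  pose s2 := map g (enum N).
  pose s1 := map Some (undup (L v)).
  have U1 : uniq s1 by rewrite map_inj_uniq ?undup_uniq //; move=> ? ? [].
  have S12 : {subset s1 <= s2}.
    move=> z /mapP[c]; rewrite mem_undup => /Hn[y [evy gy]] ->.
    by rewrite -gy; apply: map_f; rewrite mem_enum inE.
  have Z21 : size s2 <= size s1.
    by rewrite !size_map -cardE; exact: HL.
  have [_ E12] := uniq_min_size U1 S12 Z21.
  have U2 := leq_size_uniq U1 S12 Z21.
  have wN : w \in enum N by rewrite mem_enum inE.
  have : g w \in s1 by rewrite E12; apply: map_f.
  case/mapP => c; rewrite mem_undup => cL gw.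
  have Huniq y : e v y -> g y = Some c -> y = w.
    move=> evy gy; apply: (uniq_map_in U2) => //; first by rewrite mem_enum inE.
    by rewrite gy gw.
  have vw : v != w by apply: contraTneq evw => ->; rewrite eirr.
  pose t := tperm v w.
  pose g' x := g (t x).
  have [f [Pf Qf Cf Kf]] : exists f : V -> option C,
      [/\ partial_L_coloring L f, proper_partial e f,
          [set: V] :\ u \subset dom f
        & forall a : C, preim_card g' a <= preim_card f a].
    apply: IH.
    + have E1 : M g = \sum_(x | g (t x) == None) (d (t x)).+1.
        by rewrite /M (reindex_inj (@perm_inj _ t)).
      have gtw : g (t w) == None by rewrite /t tpermR gv.
      have E2 : M g = (d v).+1 + \sum_(x | (g (t x) == None) && (x != w)) (d x).+1.
        rewrite E1 (bigD1 w) //= /t tpermR; congr (_ + _).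
        apply: eq_bigr => x /andP[gx xw]; rewrite tpermD //.
        by apply: contraTneq gx => ->; rewrite tpermL gw.
        by rewrite eq_sym.
      have E3 : M g' = (d w).+1 + \sum_(x | (g (t x) == None) && (x != w)) (d x).+1.
        by rewrite /M (bigD1 w) //.
      by move: Mg; rewrite E2 E3; lia.
    + move=> x c0; rewrite /g' /t; case: tpermP => [->|->|_ _].
      * by rewrite gw => -[<-].
      * by rewrite gv.
      * exact: Pg.
    + move=> x y c0 exy; rewrite /g' /t.
      case: tpermP => [xv|xw|xv xw]; case: tpermP => [yv|yw|yv yw];
        rewrite ?gv //.
      * by rewrite xv yv eirr in exy.
      * rewrite gw => -[<-] gy; rewrite xv in exy.
        exact: yw (Huniq y exy gy).
      * move=> gx; rewrite gw => -[Ec]; rewrite -Ec in gx.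
        rewrite yv esym in exy.
        exact: xw (Huniq x exy gx).
      * exact: Qg.
  exists f; split => // a; apply: leq_trans (Kf a).
  rewrite /preim_card.
  have -> : [set x | g' x == Some a] = t @^-1: [set x | g x == Some a].
    by apply/setP => x; rewrite !inE.
  by rewrite card_preimset //; exact: perm_inj.
Qed.

End Main.

Theorem lemma4p1 (V : finType) (C : eqType) (e : rel V) (L : V -> seq C)
    (g : V -> option C) :
  simple_graph e -> connected_graph e ->
  degree_list_assignment e L ->
  partial_L_coloring L g -> proper_partial e g ->
  forall u : V,
    exists f : V -> option C,
      [/\ partial_L_coloring L f, proper_partial e f,
          [set: V] :\ u \subset dom f
        & forall a : C, preim_card g a <= preim_card f a].
Proof.
move=> [es ei] conn HL Pg Qg u.
have [d Hd] := dist_exists (fun x => conn x u).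
exact: (main Hd es ei HL (ltnSn (M d g))).
Qed.
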